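(* Let $R$ be a localizable partially ordered commutative ring with $\mathbb{N}\subseteq\mathrm{Loc}(R)$. Then the kernel of the extended Gelfand transformation $\widehat{\cdot}\colon R\to\mathscr{C}_\approx(\mathcal{D}_{\mathrm{loc}}(R))$ is $\{r\in R:\ \text{there is } s\in R^+ \text{ such that } -s\le nr\le s \text{ for all } n\in\mathbb{N}\}$.
   Context: All rings are commutative with unit $1$; ring morphisms are unital. A partially ordered commutative ring is a commutative ring $R$ with a partial order $\le$ such that $r\le s$ implies $r+t\le s+t$, and whose positive cone $R^+=\{r:0\le r\}$ is closed under multiplication and contains all squares. $\mathbb{N}=\{1,2,\dots\}$, $\mathbb{N}_0=\mathbb{N}\cup\{0\}$. $\mathrm{Loc}(R)$ is the set of $s\in 1+R^+$ such that for all $r\in R$, $rs\in R^+$ implies $r\in R^+$; $R$ is localizable if for every $r$ there is $s\in\mathrm{Loc}(R)$ with $-s\le r\le s$. Admissible domains: for a topological space $Y$, a set $\mathcal{D}$ of open subsets with $Y\in\mathcal{D}$, closed under finite intersections. On $\bigcup_{A\in\mathcal{D}}\mathscr{C}(A)$, operations are pointwise on $\operatorname{dom}f\cap\operatorname{dom}g$; $f\approx g$ iff $f|_A=g|_A$ for some $A\in\mathcal{D}$, $A\subseteq\operatorname{dom}f\cap\operatorname{dom}g$; $\mathscr{C}_\approx(\mathcal{D})$ is the quotient ring. $R_{\mathrm{loc}}$: fractions $r/s$ ($r\in R$, $s\in\mathrm{Loc}(R)$), $r/s=r'/s'$ iff $rs'=r's$, usual operations, $p/q\le r/s$ iff $ps\le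 rq$. $R^{\mathrm{bd}}_{\mathrm{loc}}=\{a:\exists n\in\mathbb{N}_0,\ -n\le a\le n\}$. $\mathcal{K}(R)$: ring morphisms $\varphi\colon R^{\mathrm{bd}}_{\mathrm{loc}}\to\mathbb{R}$ with $\varphi(a)\ge0$ for $a\ge0$, weak-$*$ topology. $\mathrm{O}_{s<\infty}=\{\varphi:\varphi(1/s)>0\}$, $\mathcal{D}_{\mathrm{loc}}(R)=\{\mathrm{O}_{s<\infty}:s\in\mathrm{Loc}(R)\}$. The extended Gelfand transformation sends $r$ to the class $\widehat r$ of $r_s\colon\mathrm{O}_{s<\infty}\to\mathbb{R}$, $\varphi\mapsto\varphi(1/s)^{-1}\varphi(r/s)$, for any $s\in\mathrm{Loc}(R)$ with $r/s\in R^{\mathrm{bd}}_{\mathrm{loc}}$ (independent of $s$); it is a ring morphism. *)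

(* Defs.v *)
From Stdlib Require Import Reals.
From mathcomp Require Import all_boot all_order all_algebra.
Set Implicit Arguments. Unset Strict Implicit. Unset Printing Implicit Defensive.
Import GRing.Theory.

Section PO.
Variable A : comPzRingType.
Variable le : A -> A -> Prop.
Local Open Scope ring_scope.

Definition is_pocr : Prop :=
  (forall x, le x x) /\
  (forall x y, le x y -> le y x -> x = y) /\
  (forall x y z, le x y -> le y z -> le x z) /\
  (forall x y t, le x y -> le (x + t) (y + t)) /\
  (forall x y, le 0 x -> le 0 y -> le 0 (x * y)) /\
  (forall x, le 0 (x * x)).

Definition Loc (s : A) : Prop :=
  le 0 (s - 1) /\ (forall r, le 0 (r * s) -> le 0 r).

Definition localizable : Prop :=
  forall r, exists s, Loc s /\ le (- s) r /\ le r s.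

(* the fraction r/s (s in Loc) lies in R_loc^bd : exists n, -n <= r/s <= n,
   i.e. (-n) * s <= r * 1 and r * 1 <= n * s *)
Definition bdfrac (r s : A) : Prop :=
  Loc s /\ exists n : nat, le (- (n%:R * s)) r /\ le r (n%:R * s).

(* An element of K(R): a positive unital ring morphism R_loc^bd -> R,
   represented by its values phi r s = phi(r/s) on representatives (r,s),
   respecting equality of fractions, and normalised to 0 on pairs that do not
   represent an element of R_loc^bd (so that such functions correspond
   bijectively to elements of K(R)).  Sum and product of fractions are
   (r s' + r' s)/(s s') and (r r')/(s s'); 0 <= r/s iff 0 <= r. *)
Definition character (phi : A -> A -> R) : Prop :=
  (forall r s, ~ bdfrac r s -> phi r s = R0) /\
  (forall r s r' s', bdfrac r s -> bdfrac r' s' -> r * s' = r' * s ->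
      phi r s = phi r' s') /\
  (phi 1 1 = R1) /\
  (forall r s r' s', bdfrac r s -> bdfrac r' s' ->
      phi (r * s' + r' * s) (s * s') = Rplus (phi r s) (phi r' s')) /\
  (forall r s r' s', bdfrac r s -> bdfrac r' s' ->
      phi (r * r') (s * s') = Rmult (phi r s) (phi r' s')) /\
  (forall r s, bdfrac r s -> le 0 r -> Rle R0 (phi r s)).

Definition inO (s : A) (phi : A -> A -> R) : Prop := Rlt R0 (phi 1 s).

Definition gelfand_comp (r s : A) (phi : A -> A -> R) : R :=
  Rmult (Rinv (phi 1 s)) (phi r s).

(* r is in the kernel of the extended Gelfand transformation:
   widehat r = 0 in C_approx(D_loc(R)), i.e. for (some/any) s in Loc with
   r/s bounded, r_s ≈ 0 : there is t in Loc with O_{t<oo} ⊆ O_{s<oo} and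
   r_s vanishing on O_{t<oo}. *)
Definition in_gelfand_kernel (r : A) : Prop :=
  exists s, bdfrac r s /\
    exists t, Loc t /\
      (forall phi, character phi -> inO t phi -> inO s phi) /\
      (forall phi, character phi -> inO t phi -> gelfand_comp r s phi = R0).

End PO.

(* Main.v *)
Require Import Defs.
From Stdlib Require Import Reals Lra Psatz.
From HB Require Import structures.
From mathcomp Require Import all_boot all_order all_algebra.
From mathcomp Require Import boolp classical_sets.
From mathcomp Require Import ring.
Import GRing.Theory.
Set Implicit Arguments. Unset Strict Implicit. Unset Printing Implicit Defensive.

Lemma INR_pos (m : nat) : (0 < m)%N -> Rlt R0 (INR m).
Proof. move=> m0; apply: lt_0_INR; exact/ltP. Qed.

Lemma small_zero (d K : R) :
  (forall m : nat, (0 < m)%N -> Rle (Rmult (INR m) d) K /\ Rle (Ropp K) (Rmult (INR m) d)) ->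
  d = R0.
Proof.
move=> H.
have gen : forall e : R, Rlt R0 e -> (forall m : nat, (0 < m)%N -> Rle (Rmult (INR m) e) K) -> False.
  move=> e e0 He.
  have [n Hn] := INR_unbounded (Rmult K (Rinv e)).
  have H1 := He n.+1 isT.
  rewrite S_INR in H1.
  have E : Rmult (Rmult K (Rinv e)) e = K.
    by rewrite Rmult_assoc Rinv_l ?Rmult_1_r //; lra.
  have : Rlt (Rmult (Rmult K (Rinv e)) e) (Rmult (Rplus (INR n) R1) e) by nra.
  lra.
case: (Rtotal_order d R0) => [dneg|[//|dpos]].
- exfalso; apply: (gen (Ropp d)); first lra.
  move=> m m0; have [_ H2] := H m m0; nra.
- exfalso; apply: (gen d) => // m m0; exact: (H m m0).1.
Qed.

Lemma search (P : nat -> Prop) K : P 0%N -> ~ P K -> exists j, P j /\ ~ P j.+1.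
Proof.
elim: K => [|K IH] H0 HK; first by [].
case: (pselect (P K)) => HPK; first by exists K.
exact: IH.
Qed.

(* ---------- abstract Kadison-Dubois for an archimedean preordering ---------- *)
Section Abstract.
Local Open Scope classical_set_scope.
Local Open Scope ring_scope.
Variable B : comPzRingType.
Variable T : B -> Prop.
Hypothesis HTadd : forall x y, T x -> T y -> T (x + y).
Hypothesis HTmul : forall x y, T x -> T y -> T (x * y).
Hypothesis HTsq : forall x, T (x * x).
Hypothesis HTarch : forall x, exists N : nat, T (N%:R - x) /\ T (N%:R + x).
Hypothesis HTinv : forall m : nat, (0 < m)%N -> exists i, m%:R * i = 1 :> B.

Lemma T0 : T 0. Proof. by have := HTsq 0; rewrite mulr0. Qed.
Lemma T1 : T 1. Proof. by have := HTsq 1; rewrite mulr1. Qed.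
Lemma Tnat n : T n%:R.
Proof. elim: n => [|n IH]; first exact: T0. rewrite mulrSr; exact: HTadd IH T1. Qed.
Lemma Tinv m : (0 < m)%N -> exists i, m%:R * i = 1 /\ T i.
Proof.
move=> m0; have [i Hi] := HTinv m0; exists i; split => //.
have -> : i = m%:R * (i * i) by rewrite mulrA Hi mul1r.
exact: HTmul (Tnat m) (HTsq i).
Qed.

Lemma Tdiv m x : (0 < m)%N -> T (m%:R * x) -> T x.
Proof.
move=> m0 H; have [i [Hi Ti]] := Tinv m0.
have -> : x = (m%:R * x) * i by rewrite mulrAC Hi mul1r.
exact: HTmul.
Qed.

Definition achar (F : B -> R) :=
  (forall x y, F (x + y) = Rplus (F x) (F y)) /\
  (forall x y, F (x * y) = Rmult (F x) (F y)) /\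
  F 1 = R1 /\ (forall x, T x -> Rle R0 (F x)).

Lemma step2 f p q : T p -> T q -> f * p = 1 + q -> T f.
Proof.
move=> Tp Tq E.
have [N [HN _]] := HTarch p; have [K [_ HK]] := HTarch f.
pose N' := N.+1.
have TN' : T (N'%:R - p).
  have -> : N'%:R - p = (N%:R - p) + 1 by rewrite /N' mulrSr; ring.
  exact: HTadd HN T1.
have claim : forall k : nat, T (N'%:R * f + k%:R) -> T (N'%:R * f).
  elim=> [|k IH] H; first by rewrite addr0 in H.
  apply: IH; apply: (@Tdiv N') => //.
  have -> : N'%:R * (N'%:R * f + k%:R) =
     N'%:R * q + (N'%:R * f + k.+1%:R) * (N'%:R - p) + k.+1%:R * p
     + N'%:R * (f * p - (1 + q)) by rewrite mulrSr; ring.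
  rewrite E subrr mulr0 addr0.
  apply: HTadd; last exact: HTmul (Tnat _) Tp.
  apply: HTadd; first exact: HTmul (Tnat _) Tq.
  exact: HTmul H TN'.
apply: (@Tdiv N') => //; apply: (claim (N' * K)%N).
have -> : N'%:R * f + (N' * K)%:R = N'%:R * (K%:R + f) by rewrite natrM; ring.
exact: HTmul (Tnat _) HK.
Qed.

Section PhiM.
Variable M : B -> Prop.
Hypothesis HMT : forall x, T x -> M x.
Hypothesis HMadd : forall x y, M x -> M y -> M (x + y).
Hypothesis HMmul : forall x y, M x -> M y -> M (x * y).
Hypothesis HMprop : ~ M (-1).
Hypothesis HMtot : forall x, M x \/ M (- x).

Definition natd (a b : nat) : B := a%:R - b%:R.

Lemma Mnat n : M n%:R. Proof. exact/HMT/Tnat. Qed.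
Lemma M0 : M 0. Proof. exact/HMT/T0. Qed.

Lemma M_natd_le a b : M (natd a b) -> (b <= a)%N.
Proof.
move=> H; case: (leqP b a) => // Hlt; exfalso.
have k0 : (0 < b - a)%N by rewrite subn_gt0.
have [i [Hi Ti]] := Tinv k0.
apply: HMprop.
have -> : -1 = natd a b * i.
  rewrite /natd; have -> : b%:R = a%:R + (b - a)%:R :> B.
    by rewrite -natrD subnKC // ltnW.
  have -> : a%:R - (a%:R + (b - a)%:R) = - (b - a)%:R :> B by ring.
  by rewrite mulNr Hi.
exact: HMmul H (HMT Ti).
Qed.

Lemma approx x m : (0 < m)%N -> exists a b,
  M (m%:R * x - natd a b) /\ M (natd a.+1 b - m%:R * x).
Proof.
move=> m0; have [N [H1 H2]] := HTarch x.
pose P j := M (m%:R * x - natd j (m * N)).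
have P0 : P 0%N.
  rewrite /P /natd.
  have -> : m%:R * x - (0%:R - (m * N)%:R) = m%:R * (N%:R + x) :> B
    by rewrite natrM; ring.
  exact: HMmul (Mnat m) (HMT H2).
have PK : ~ P (m * N + m * N).+1.
  rewrite /P /natd => HP; apply: HMprop.
  have -> : -1 = (m%:R * x - ((m * N + m * N).+1%:R - (m * N)%:R))
               + m%:R * (N%:R - x) :> B by rewrite mulrSr natrD natrM; ring.
  exact: HMadd HP (HMmul (Mnat m) (HMT H1)).
have [j [Pj nPj]] := search P0 PK.
exists j, (m * N)%N; split => //.
case: (HMtot (m%:R * x - natd j.+1 (m * N))) => // H.
by move: H; rewrite opprB.
Qed.

Lemma approx_nn x m : M x -> exists c : nat,
  M (m%:R * x - c%:R) /\ M (c.+1%:R - m%:R * x).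
Proof.
move=> Mx; have [N [H1 H2]] := HTarch x.
pose P j := M (m%:R * x - j%:R).
have P0 : P 0%N by rewrite /P subr0; exact: HMmul (Mnat m) Mx.
have PK : ~ P (m * N).+1.
  rewrite /P => HP; apply: HMprop.
  have -> : -1 = (m%:R * x - (m * N).+1%:R) + m%:R * (N%:R - x) :> B
    by rewrite mulrSr natrM; ring.
  exact: HMadd HP (HMmul (Mnat m) (HMT H1)).
have [j [Pj nPj]] := search P0 PK.
exists j; split => //.
case: (HMtot (m%:R * x - j.+1%:R)) => // H.
by move: H; rewrite opprB.
Qed.

Definition S x : R -> Prop := fun y => exists a b m, (0 < m)%N /\
  y = Rdiv (Rminus (INR a) (INR b)) (INR m) /\ M (m%:R * x - natd a b).

Lemma Sbound x : bound (S x).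
Proof.
have [N [H1 _]] := HTarch x.
exists (INR N) => y [a [b [m [m0 [-> H]]]]].
have : M (natd (m * N + b) a).
  have -> : natd (m * N + b) a = m%:R * (N%:R - x) + (m%:R * x - natd a b)
    by rewrite /natd natrD natrM; ring.
  exact: HMadd (HMmul (Mnat m) (HMT H1)) H.
move/M_natd_le/leP/le_INR; rewrite plus_INR mult_INR => Hle.
have mpos := INR_pos m0.
have E : Rmult (Rdiv (Rminus (INR a) (INR b)) (INR m)) (INR m) = Rminus (INR a) (INR b).
  by rewrite /Rdiv Rmult_assoc Rinv_l ?Rmult_1_r //; lra.
nra.
Qed.

Lemma Sne x : exists y, S x y.
Proof.
have [a [b [H _]]] := approx x (isT : (0 < 1)%N).
by exists (Rdiv (Rminus (INR a) (INR b)) (INR 1)), a, b, 1%N.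
Qed.

Definition Phi x : R := proj1_sig (completeness (S x) (Sbound x) (Sne x)).
Lemma Phi_lub x : is_lub (S x) (Phi x).
Proof. exact: proj2_sig. Qed.

Lemma C1 x a b m : (0 < m)%N -> M (m%:R * x - natd a b) ->
  Rle (Rminus (INR a) (INR b)) (Rmult (INR m) (Phi x)).
Proof.
move=> m0 H; have [ub _] := Phi_lub x.
have := ub _ (ex_intro _ a (ex_intro _ b (ex_intro _ m (conj m0 (conj erefl H))))).
have mpos := INR_pos m0.
have E : Rmult (Rdiv (Rminus (INR a) (INR b)) (INR m)) (INR m) = Rminus (INR a) (INR b).
  by rewrite /Rdiv Rmult_assoc Rinv_l ?Rmult_1_r //; lra.
nra.
Qed.

Lemma C2 x a b m : (0 < m)%N -> M (natd a b - m%:R * x) ->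
  Rle (Rmult (INR m) (Phi x)) (Rminus (INR a) (INR b)).
Proof.
move=> m0 H; have [_ lub] := Phi_lub x.
have mpos := INR_pos m0.
have E : Rmult (Rdiv (Rminus (INR a) (INR b)) (INR m)) (INR m) = Rminus (INR a) (INR b).
  by rewrite /Rdiv Rmult_assoc Rinv_l ?Rmult_1_r //; lra.
suff : Rle (Phi x) (Rdiv (Rminus (INR a) (INR b)) (INR m)) by nra.
apply: lub => y [a' [b' [m' [m0' [-> H']]]]].
have : M (natd (m' * a + m * b') (m' * b + m * a')).
  have -> : natd (m' * a + m * b') (m' * b + m * a') =
     m'%:R * (natd a b - m%:R * x) + m%:R * (m'%:R * x - natd a' b')
    by rewrite /natd !natrD !natrM; ring.
  exact: HMadd (HMmul (Mnat _) H) (HMmul (Mnat _) H').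
move/M_natd_le/leP/le_INR; rewrite !plus_INR !mult_INR => Hle.
have mpos' := INR_pos m0'.
have E' : Rmult (Rdiv (Rminus (INR a') (INR b')) (INR m')) (INR m') = Rminus (INR a') (INR b').
  by rewrite /Rdiv Rmult_assoc Rinv_l ?Rmult_1_r //; lra.
set u := Rdiv _ (INR m') in E' *; set v := Rdiv _ (INR m) in E *.
have mm : Rlt R0 (Rmult (INR m) (INR m')) by nra.
nra.
Qed.


Lemma natd_n n : natd n 0 = n%:R. Proof. by rewrite /natd subr0. Qed.

Lemma Phi_nonneg x : M x -> Rle R0 (Phi x).
Proof.
move=> Mx; have := @C1 x 0 0 1 isT.
rewrite /natd subrr subr0 mul1r => /(_ Mx).
rewrite /= Rminus_0_r Rmult_1_l //.
Qed.

Lemma Phi_nonpos x : M (- x) -> Rle (Phi x) R0.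
Proof.
move=> Mx; have := @C2 x 0 0 1 isT.
rewrite /natd subrr sub0r mul1r => /(_ Mx).
rewrite /= Rminus_0_r Rmult_1_l //.
Qed.

Lemma Phi1 : Phi 1 = R1.
Proof.
have h1 := @C1 1 1 0 1 isT; have h2 := @C2 1 1 0 1 isT.
rewrite /natd subr0 mul1r subrr in h1 h2.
have := h1 M0; have := h2 M0; rewrite /= Rminus_0_r Rmult_1_l; lra.
Qed.

Lemma Phi_add x y : Phi (x + y) = Rplus (Phi x) (Phi y).
Proof.
apply: Rminus_diag_uniq; apply: (@small_zero _ (Rplus R1 R1)) => m m0.
have [a1 [b1 [Hx1 Hx2]]] := approx x m0.
have [a2 [b2 [Hy1 Hy2]]] := approx y m0.
have HL : M (m%:R * (x + y) - natd (a1 + a2) (b1 + b2)).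
  have -> : m%:R * (x + y) - natd (a1 + a2) (b1 + b2) =
     (m%:R * x - natd a1 b1) + (m%:R * y - natd a2 b2) by rewrite /natd !natrD; ring.
  exact: HMadd Hx1 Hy1.
have HU : M (natd (a1.+1 + a2.+1) (b1 + b2) - m%:R * (x + y)).
  have -> : natd (a1.+1 + a2.+1) (b1 + b2) - m%:R * (x + y) =
     (natd a1.+1 b1 - m%:R * x) + (natd a2.+1 b2 - m%:R * y) by rewrite /natd !natrD; ring.
  exact: HMadd Hx2 Hy2.
have L := C1 m0 HL; have U := C2 m0 HU.
have L1 := C1 m0 Hx1; have U1 := C2 m0 Hx2.
have L2 := C1 m0 Hy1; have U2 := C2 m0 Hy2.
rewrite !plus_INR !S_INR in L U U1 U2 L1 L2.
split; lra.
Qed.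

Lemma Phi_mul_nn x y : M x -> M y -> Phi (x * y) = Rmult (Phi x) (Phi y).
Proof.
move=> Mx My.
have X0 := Phi_nonneg Mx; have Y0 := Phi_nonneg My.
apply: Rminus_diag_uniq; apply: (@small_zero _ (Rplus (Rplus (Phi x) (Phi y)) R1)) => m m0.
have [cx [Hx1 Hx2]] := approx_nn m Mx.
have [cy [Hy1 Hy2]] := approx_nn m My.
have mm0 : (0 < m * m)%N by rewrite muln_gt0 m0.
have HL : M ((m * m)%:R * (x * y) - natd (cx * cy) 0).
  have -> : (m * m)%:R * (x * y) - natd (cx * cy) 0 =
    (m%:R * x - cx%:R) * (m%:R * y - cy%:R) + cx%:R * (m%:R * y - cy%:R)
     + cy%:R * (m%:R * x - cx%:R) by rewrite /natd !natrM; ring.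
  apply: HMadd; last exact: HMmul (Mnat _) Hx1.
  apply: HMadd; last exact: HMmul (Mnat _) Hy1.
  exact: HMmul.
have HU : M (natd (cx.+1 * cy.+1) 0 - (m * m)%:R * (x * y)).
  have -> : natd (cx.+1 * cy.+1) 0 - (m * m)%:R * (x * y) =
    (cx.+1%:R - m%:R * x) * cy.+1%:R + (m%:R * x) * (cy.+1%:R - m%:R * y)
    by rewrite /natd !natrM; ring.
  apply: HMadd; first exact: HMmul Hx2 (Mnat _).
  exact: HMmul (HMmul (Mnat _) Mx) Hy2.
have L := C1 mm0 HL; have U := C2 mm0 HU.
rewrite -(natd_n cx) in Hx1; rewrite -(natd_n cx.+1) in Hx2.
rewrite -(natd_n cy) in Hy1; rewrite -(natd_n cy.+1) in Hy2.
have L1 := C1 m0 Hx1; have U1 := C2 m0 Hx2.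
have L2 := C1 m0 Hy1; have U2 := C2 m0 Hy2.
rewrite !mult_INR !S_INR /= Rminus_0_r in L U L1 U1 L2 U2.
have mpos := INR_pos m0.
have m1 : Rle R1 (INR m) by have := le_INR 1 m; rewrite /=; apply; apply/leP.
have cx0 := pos_INR cx; have cy0 := pos_INR cy.
set mm := INR m in L U L1 U1 L2 U2 mpos m1 *.
set X := Phi x in X0 L1 U1 *; set Y := Phi y in Y0 L2 U2 *; set Z := Phi (x * y) in L U *.
set Cx := INR cx in L U L1 U1 cx0 *; set Cy := INR cy in L U L2 U2 cy0 *.
have P1 : Rle (Rmult Cx Cy) (Rmult (Rmult mm X) (Rmult mm Y)) by nra.
have P2 : Rle (Rmult (Rmult mm X) (Rmult mm Y)) (Rmult (Rplus Cx R1) (Rplus Cy R1)) by nra.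
have Q1 : Rle (Rmult mm (Rmult mm (Rminus Z (Rmult X Y)))) (Rmult mm (Rplus (Rplus X Y) R1)) by nra.
have Q2 : Rle (Rmult mm (Ropp (Rplus (Rplus X Y) R1))) (Rmult mm (Rmult mm (Rminus Z (Rmult X Y)))) by nra.
split; [apply: (Rmult_le_reg_l mm) => //| apply: (Rmult_le_reg_l mm) => //].
Qed.

Lemma Phi0 : Phi 0 = R0.
Proof. have := Phi_add 0 0; rewrite addr0; lra. Qed.

Lemma Phi_opp x : Phi (- x) = Ropp (Phi x).
Proof. have := Phi_add x (- x); rewrite subrr Phi0; lra. Qed.

Lemma Phi_nat n : Phi n%:R = INR n.
Proof.
elim: n => [|n IH]; first by rewrite Phi0.
by rewrite mulrSr Phi_add IH Phi1 S_INR.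
Qed.

Lemma Phi_mul x y : Phi (x * y) = Rmult (Phi x) (Phi y).
Proof.
have [N [_ HN]] := HTarch x; have [N' [_ HN']] := HTarch y.
have E : x * y = (N%:R + x) * (N'%:R + y) - N'%:R * (N%:R + x)
                 - N%:R * (N'%:R + y) + N%:R * N'%:R by ring.
have MX := HMT HN; have MY := HMT HN'.
rewrite E !Phi_add !Phi_opp (Phi_mul_nn MX MY) (Phi_mul_nn (Mnat N') MX).
rewrite (Phi_mul_nn (Mnat N) MY) (Phi_mul_nn (Mnat N) (Mnat N')).
rewrite !Phi_add !Phi_nat; lra.
Qed.

Lemma Phi_achar : achar Phi.
Proof.
split; first exact: Phi_add.
split; first exact: Phi_mul.
split; first exact: Phi1.
move=> x Tx; exact/Phi_nonneg/HMT.
Qed.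

Lemma char_neg f : M (- f) -> exists F, achar F /\ Rle (F f) R0.
Proof. move=> Mf; exists Phi; split; [exact: Phi_achar | exact: Phi_nonpos]. Qed.

End PhiM.

Definition good f (X : set B) :=
  (forall x, T x -> X x) /\ X (- f) /\ (forall x y, X x -> X y -> X (x + y)) /\
  (forall x y, X x -> X y -> X (x * y)) /\ ~ X (-1).

Lemma max_good f X0 : good f X0 ->
  exists M, good f M /\ forall M', M `<` M' -> ~ good f M'.
Proof.
move=> G0.
pose P := fun X : set B => X = set0 \/ good f X.
have chain : forall F : set (set B), F `<=` P -> total_on F subset ->
    P (\bigcup_(X in F) X).
  move=> F FP Ftot.
  case: (pselect (exists X x, F X /\ X x)) => [[G [g [FG Gg]]] | none]; last first.
    left; apply/seteqP; split => x // [X FX Xx]; apply: none; by exists X, x.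
  right.
  have goodof : forall X x, F X -> X x -> good f X.
    move=> X x FX Xx; case: (FP X FX) => // X0e; by rewrite X0e in Xx.
  have [GT [Gf _]] := goodof _ _ FG Gg.
  split; first by move=> x Tx; exists G => //; exact: GT.
  split; first by exists G.
  split.
    move=> x y [X1 FX1 X1x] [X2 FX2 X2y].
    case: (Ftot X1 X2 FX1 FX2) => sub.
      exists X2 => //; have [_ [_ [ad _]]] := goodof _ _ FX2 X2y; exact: ad (sub _ X1x) X2y.
    exists X1 => //; have [_ [_ [ad _]]] := goodof _ _ FX1 X1x; exact: ad X1x (sub _ X2y).
  split.
    move=> x y [X1 FX1 X1x] [X2 FX2 X2y].
    case: (Ftot X1 X2 FX1 FX2) => sub.
      exists X2 => //; have [_ [_ [_ [mu _]]]] := goodof _ _ FX2 X2y; exact: mu (sub _ X1x) X2y.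
    exists X1 => //; have [_ [_ [_ [mu _]]]] := goodof _ _ FX1 X1x; exact: mu X1x (sub _ X2y).
  move=> [X FX Xm]; have [_ [_ [_ [_ np]]]] := goodof _ _ FX Xm; exact: np.
have [A [PA maxA]] := Zorn_bigcup chain.
case: PA => [A0|GA].
  exfalso; apply: (maxA X0); last by right.
  rewrite A0; split; first by [].
  move=> H; have [_ [Gf _]] := G0; exact: (H _ Gf).
exists A; split => // M' AM' GM'; exact: (maxA M' AM' (or_intror GM')).
Qed.

Lemma max_total f M : good f M -> (forall M', M `<` M' -> ~ good f M') ->
  forall a, M a \/ M (- a).
Proof.
move=> GM maxM a.
case: (pselect (M a)) => Ma; first by left.
case: (pselect (M (- a))) => Mna; first by right.
exfalso.
have [MT [Mf [Madd [Mmul Mprop]]]] := GM.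
have ext : forall b, ~ M b -> exists y z, M y /\ M z /\ -1 = y + b * z.
  move=> b Mb; pose X := fun x => exists y z, M y /\ M z /\ x = y + b * z.
  case: (pselect (X (-1))) => // nX; exfalso.
  have M0' : M 0 by apply: MT; exact: T0.
  have M1' : M 1 by apply: MT; exact: T1.
  apply: (maxM X).
    split.
      move=> x Mx; exists x, 0; split => //; split => //; by rewrite mulr0 addr0.
    move=> H; apply: Mb; apply: H; exists 0, 1; split => //; split => //; by rewrite mulr1 add0r.
  split.
    move=> x Tx; exists x, 0; split; first exact: MT.
    by split => //; rewrite mulr0 addr0.
  split; first by exists (- f), 0; split => //; split => //; rewrite mulr0 addr0.
  split.
    move=> x y [y1 [z1 [My1 [Mz1 ->]]]] [y2 [z2 [My2 [Mz2 ->]]]].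
    exists (y1 + y2), (z1 + z2); split; first exact: Madd.
    split; first exact: Madd.
    by ring.
  split; last exact: nX.
  move=> x y [y1 [z1 [My1 [Mz1 ->]]]] [y2 [z2 [My2 [Mz2 ->]]]].
  exists (y1 * y2 + (b * b) * (z1 * z2)), (y1 * z2 + y2 * z1); split.
    apply: (Madd); first exact: Mmul.
    apply: (Mmul); [exact: MT (HTsq b) | exact: Mmul].
  split; first by apply: (Madd); exact: Mmul.
  by ring.
have [y1 [z1 [My1 [Mz1 E1]]]] := ext a Ma.
have [y2 [z2 [My2 [Mz2 E2]]]] := ext (- a) Mna.
apply: Mprop.
have -> : -1 = y1 + y2 + y1 * y2 + (a * a) * (z1 * z2).
  have h1 : y1 = -1 - a * z1 by rewrite E1; ring.
  have h2 : y2 = -1 + a * z2 by rewrite E2; ring.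
  rewrite h1 h2; ring.
apply: (Madd); last by apply: (Mmul); [exact: MT (HTsq a) | exact: Mmul].
apply: (Madd); last exact: Mmul.
exact: Madd.
Qed.

Theorem KD f : (forall F, achar F -> Rlt R0 (F f)) -> T f.
Proof.
move=> Hpos.
case: (pselect (exists p q, T p /\ T q /\ f * p = 1 + q)) => [[p [q [Tp [Tq E]]]] | Hno].
  exact: step2 Tp Tq E.
exfalso.
pose X0 := fun x => exists p q, T p /\ T q /\ x = p - f * q.
have G0 : good f X0.
  split.
    move=> x Tx; exists x, 0; split => //; split; first exact: T0.
    by rewrite mulr0 subr0.
  split; first by exists 0, 1; split; first exact: T0; split; first exact: T1; rewrite mulr1 sub0r.
  split.
    move=> x y [p1 [q1 [Tp1 [Tq1 ->]]]] [p2 [q2 [Tp2 [Tq2 ->]]]].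
    exists (p1 + p2), (q1 + q2); split; first exact: HTadd.
    split; first exact: HTadd.
    by ring.
  split.
    move=> x y [p1 [q1 [Tp1 [Tq1 ->]]]] [p2 [q2 [Tp2 [Tq2 ->]]]].
    exists (p1 * p2 + (f * f) * (q1 * q2)), (p1 * q2 + p2 * q1); split.
      apply: HTadd; first exact: HTmul.
      apply: HTmul; [exact: HTsq | exact: HTmul].
    split; first by apply: HTadd; exact: HTmul.
    by ring.
  move=> [p [q [Tp [Tq E]]]]; apply: Hno; exists q, p; split => //; split => //.
  have -> : f * q = 1 + p + (-1 - (p - f * q)) by ring.
  by rewrite -E subrr addr0.
have [M [GM maxM]] := max_good G0.
have tot := max_total GM maxM.
have [MT [Mf [Madd [Mmul Mprop]]]] := GM.
have [F [HF Ff]] := char_neg MT Madd Mmul Mprop tot Mf.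
have := Hpos F HF; lra.
Qed.

End Abstract.

Section AcharFacts.
Local Open Scope ring_scope.
Variable B : comPzRingType.
Variable T : B -> Prop.
Variable F : B -> R.
Hypothesis HF : achar T F.

Lemma achar0 : F 0 = R0.
Proof. have [Fa _] := HF; have := Fa 0 0; rewrite addr0; lra. Qed.
Lemma acharN x : F (- x) = Ropp (F x).
Proof. have [Fa _] := HF; have := Fa x (- x); rewrite subrr achar0; lra. Qed.
Lemma acharn n : F n%:R = INR n.
Proof.
have [Fa [_ [F1 _]]] := HF.
elim: n => [|n IH]; first by rewrite achar0.
by rewrite mulrSr Fa IH F1 S_INR.
Qed.
End AcharFacts.

(* ---------- the ring R_loc^bd ---------- *)
Section Concrete.
Local Open Scope classical_set_scope.
Local Open Scope ring_scope.
Variable A : comPzRingType.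
Variable le : A -> A -> Prop.
Hypothesis Hpo : is_pocr le.
Hypothesis HN : forall n : nat, (0 < n)%N -> Loc le (n%:R : A).

Notation P0 x := (le 0 x).

Lemma le_P0 x y : le x y <-> P0 (y - x).
Proof.
have [_ [_ [_ [Hadd _]]]] := Hpo; split => H.
  by have := Hadd _ _ (- x) H; rewrite subrr.
by have := Hadd _ _ x H; rewrite add0r subrK.
Qed.

Lemma P0add x y : P0 x -> P0 y -> P0 (x + y).
Proof.
have [_ [_ [Htr [Hadd _]]]] := Hpo => Hx Hy.
have := Hadd _ _ y Hx; rewrite add0r => H; exact: Htr Hy H.
Qed.
Lemma P0mul x y : P0 x -> P0 y -> P0 (x * y).
Proof. have [_ [_ [_ [_ [Hm _]]]]] := Hpo; exact: Hm. Qed.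
Lemma P0sq x : P0 (x * x).
Proof. have [_ [_ [_ [_ [_ Hs]]]]] := Hpo; exact: Hs. Qed.
Lemma P01 : P0 1. Proof. by have := P0sq 1; rewrite mulr1. Qed.
Lemma P0nat n : P0 n%:R.
Proof. elim: n => [|n IH]; first by have := P0sq 0; rewrite mulr0. rewrite mulrSr; exact: P0add IH P01. Qed.
Lemma P0anti x : P0 x -> P0 (- x) -> x = 0.
Proof.
have [_ [Han _]] := Hpo => H1 H2; apply: Han => //.
by apply/le_P0; rewrite sub0r.
Qed.
Lemma P0_eq x y : x = y -> P0 x -> P0 y. Proof. by move=> ->. Qed.

Lemma Loc_P0 s : Loc le s -> P0 s.
Proof. move=> [H _]; have := P0add H P01; by rewrite subrK. Qed.
Lemma Loc_reg s r : Loc le s -> r * s = 0 -> r = 0.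
Proof.
move=> [_ Hs] E; apply: P0anti; apply: Hs.
  by rewrite E; have := P0sq 0; rewrite mulr0.
by rewrite mulNr E oppr0; have := P0sq 0; rewrite mulr0.
Qed.
Lemma Loc_mul s s' : Loc le s -> Loc le s' -> Loc le (s * s').
Proof.
move=> [H1 H1'] [H2 H2']; split.
  have -> : s * s' - 1 = (s - 1) * (s' - 1) + (s - 1) + (s' - 1) by ring.
  by apply: P0add; [apply: P0add => //; exact: P0mul|].
move=> r Hr; apply: H1'; apply: H2'; by rewrite -mulrA.
Qed.
Lemma Loc1 : Loc le 1.
Proof. split; first by rewrite subrr; have := P0sq 0; rewrite mulr0. by move=> r; rewrite mulr1. Qed.
Lemma Loc_div n x : (0 < n)%N -> P0 (n%:R * x) -> P0 x.
Proof. move=> n0 H; have [_ Hl] := HN n0; apply: Hl; by rewrite mulrC. Qed.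

Definition bd (x : A * A) := bdfrac le x.1 x.2.

Lemma bdE x : bd x <-> Loc le x.2 /\ exists n : nat, P0 (n%:R * x.2 + x.1) /\ P0 (n%:R * x.2 - x.1).
Proof.
rewrite /bd /bdfrac; split => -[L [n [H1 H2]]]; split => //; exists n.
  by move/le_P0: H1; rewrite opprK addrC => H1; move/le_P0: H2.
by split; apply/le_P0 => //; rewrite opprK addrC.
Qed.

Definition padd (x y : A * A) := (x.1 * y.2 + y.1 * x.2, x.2 * y.2).
Definition pmul (x y : A * A) := (x.1 * y.1, x.2 * y.2).
Definition popp (x : A * A) := (- x.1, x.2).
Definition peq (x y : A * A) := x.1 * y.2 = y.1 * x.2.

Lemma bd_add x y : bd x -> bd y -> bd (padd x y).
Proof.
move=> /bdE [Lx [n [Hx1 Hx2]]] /bdE [Ly [n' [Hy1 Hy2]]]; apply/bdE; split.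
  exact: Loc_mul.
have sx := Loc_P0 Lx; have sy := Loc_P0 Ly.
exists (n + n')%N; rewrite /padd /=; split.
  have -> : (n + n')%:R * (x.2 * y.2) + (x.1 * y.2 + y.1 * x.2) =
    (n%:R * x.2 + x.1) * y.2 + (n'%:R * y.2 + y.1) * x.2 by rewrite natrD; ring.
  by apply: P0add; exact: P0mul.
have -> : (n + n')%:R * (x.2 * y.2) - (x.1 * y.2 + y.1 * x.2) =
  (n%:R * x.2 - x.1) * y.2 + (n'%:R * y.2 - y.1) * x.2 by rewrite natrD; ring.
by apply: P0add; exact: P0mul.
Qed.

Lemma bd_mul x y : bd x -> bd y -> bd (pmul x y).
Proof.
move=> /bdE [Lx [n [Hx1 Hx2]]] /bdE [Ly [n' [Hy1 Hy2]]]; apply/bdE; split.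
  exact: Loc_mul.
exists (n * n')%N; rewrite /pmul /=; split; apply: (@Loc_div 2) => //.
  have -> : 2%:R * ((n * n')%:R * (x.2 * y.2) + x.1 * y.1) =
    (n%:R * x.2 - x.1) * (n'%:R * y.2 - y.1) + (n%:R * x.2 + x.1) * (n'%:R * y.2 + y.1)
    by rewrite natrM; ring.
  by apply: P0add; exact: P0mul.
have -> : 2%:R * ((n * n')%:R * (x.2 * y.2) - x.1 * y.1) =
  (n%:R * x.2 - x.1) * (n'%:R * y.2 + y.1) + (n%:R * x.2 + x.1) * (n'%:R * y.2 - y.1)
  by rewrite natrM; ring.
by apply: P0add; exact: P0mul.
Qed.

Lemma bd_opp x : bd x -> bd (popp x).
Proof.
move=> /bdE [Lx [n [Hx1 Hx2]]]; apply/bdE; split => //; exists n; rewrite /popp /=.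
by rewrite opprK; split.
Qed.

Lemma bd_nat n : bd (n%:R, 1).
Proof.
apply/bdE; split; first exact: Loc1.
exists n; rewrite /= mulr1 subrr; split; first exact: P0add (P0nat n) (P0nat n).
by have := P0sq 0; rewrite mulr0.
Qed.

Lemma bd_inv s : Loc le s -> bd (1, s).
Proof.
move=> L; apply/bdE; split => //; exists 1%N; rewrite /= mul1r; split.
  exact: P0add (Loc_P0 L) P01.
by case: L.
Qed.

Lemma peq_refl x : peq x x. Proof. by []. Qed.
Lemma peq_sym x y : peq x y -> peq y x. Proof. by rewrite /peq. Qed.
Lemma peq_trans x y z : Loc le y.2 -> peq x y -> peq y z -> peq x z.
Proof.
rewrite /peq => L E1 E2.
have : (x.1 * z.2 - z.1 * x.2) * y.2 = 0.
  have -> : (x.1 * z.2 - z.1 * x.2) * y.2 = (x.1 * y.2) * z.2 - (z.1 * y.2) * x.2 by ring.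
  by rewrite E1 -E2; ring.
by move/(Loc_reg L)/eqP; rewrite subr_eq0 => /eqP.
Qed.
Lemma peq_add x x' y y' : peq x x' -> peq y y' -> peq (padd x y) (padd x' y').
Proof.
rewrite /peq /padd /= => E1 E2.
have -> : (x.1 * y.2 + y.1 * x.2) * (x'.2 * y'.2) =
  (x.1 * x'.2) * (y.2 * y'.2) + (y.1 * y'.2) * (x.2 * x'.2) by ring.
rewrite E1 E2; ring.
Qed.
Lemma peq_mul x x' y y' : peq x x' -> peq y y' -> peq (pmul x y) (pmul x' y').
Proof.
rewrite /peq /pmul /= => E1 E2.
have -> : x.1 * y.1 * (x'.2 * y'.2) = (x.1 * x'.2) * (y.1 * y'.2) by ring.
rewrite E1 E2; ring.
Qed.
Lemma peq_opp x x' : peq x x' -> peq (popp x) (popp x').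
Proof. by rewrite /peq /popp /= !mulNr => ->. Qed.

Definition cls (x : A * A) : set (A * A) := fun y => bd y /\ peq x y.

Record Bt := MkB { bset : set (A * A); bP : exists x, bd x /\ bset = cls x }.
HB.instance Definition _ := gen_eqMixin Bt.
HB.instance Definition _ := gen_choiceMixin Bt.

Lemma Bt_eq (a b : Bt) : bset a = bset b -> a = b.
Proof.
case: a b => [C p] [C' p'] /= E; subst C'; congr MkB; exact: Prop_irrelevance.
Qed.

Definition mk (x : A * A) (h : bd x) : Bt := MkB (ex_intro _ x (conj h erefl)).
Definition rep (b : Bt) : A * A := proj1_sig (cid (bP b)).
Lemma repP b : bd (rep b) /\ bset b = cls (rep b).
Proof. exact: proj2_sig (cid (bP b)). Qed.

Lemma mk_eq x y hx hy : peq x y -> @mk x hx = @mk y hy.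
Proof.
move=> E; apply: Bt_eq => /=; apply/seteqP; split => z [bz Ez]; split => //.
  by apply: (peq_trans _ (peq_sym E) Ez); case/bdE: hx.
by apply: (peq_trans _ E Ez); case/bdE: hy.
Qed.

Lemma rep_mk x h : peq (rep (@mk x h)) x.
Proof.
have [br E] := repP (mk h); move: E => /= E.
have : cls x x by split => //; exact: peq_refl.
rewrite E => -[_ H]; exact: H.
Qed.

Lemma mk_rep b h : @mk (rep b) h = b.
Proof. apply: Bt_eq => /=; by rewrite (repP b).2. Qed.

Lemma Bt_ind (P : Bt -> Prop) : (forall x h, P (@mk x h)) -> forall b, P b.
Proof. move=> H b; rewrite -(mk_rep (repP b).1); exact: H. Qed.

Lemma mk_inj x y hx hy : @mk x hx = @mk y hy -> peq x y.
Proof.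
move=> E; have := rep_mk hx; rewrite E => H.
apply: (peq_trans _ (peq_sym (rep_mk hx)) _); first by case/bdE: (repP (mk hx)).1.
by rewrite E; exact: rep_mk.
Qed.

Definition addB (a b : Bt) : Bt := mk (bd_add (repP a).1 (repP b).1).
Definition mulB (a b : Bt) : Bt := mk (bd_mul (repP a).1 (repP b).1).
Definition oppB (a : Bt) : Bt := mk (bd_opp (repP a).1).
Definition zeroB : Bt := mk (bd_nat 0).
Definition oneB : Bt := mk (bd_nat 1).

Lemma addB_mk x y hx hy : addB (@mk x hx) (@mk y hy) = mk (bd_add hx hy).
Proof. apply: mk_eq; apply: peq_add; exact: rep_mk. Qed.
Lemma mulB_mk x y hx hy : mulB (@mk x hx) (@mk y hy) = mk (bd_mul hx hy).
Proof. apply: mk_eq; apply: peq_mul; exact: rep_mk. Qed.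
Lemma oppB_mk x hx : oppB (@mk x hx) = mk (bd_opp hx).
Proof. apply: mk_eq; apply: peq_opp; exact: rep_mk. Qed.

Lemma addBA : associative addB.
Proof.
elim/Bt_ind => x hx; elim/Bt_ind => y hy; elim/Bt_ind => z hz.
rewrite !addB_mk; apply: mk_eq; rewrite /peq /padd /=; ring.
Qed.
Lemma addBC : commutative addB.
Proof.
elim/Bt_ind => x hx; elim/Bt_ind => y hy.
rewrite !addB_mk; apply: mk_eq; rewrite /peq /padd /=; ring.
Qed.
Lemma add0B : left_id zeroB addB.
Proof.
elim/Bt_ind => x hx; rewrite /zeroB addB_mk; apply: mk_eq; rewrite /peq /padd /=; ring.
Qed.
Lemma addNB : left_inverse zeroB oppB addB.
Proof.
elim/Bt_ind => x hx; rewrite /zeroB oppB_mk addB_mk; apply: mk_eq; rewrite /peq /padd /popp /=; ring.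
Qed.

HB.instance Definition _ := GRing.isZmodule.Build Bt addBA addBC add0B addNB.

Lemma mulBA : associative mulB.
Proof.
elim/Bt_ind => x hx; elim/Bt_ind => y hy; elim/Bt_ind => z hz.
rewrite !mulB_mk; apply: mk_eq; rewrite /peq /pmul /=; ring.
Qed.
Lemma mulBC : commutative mulB.
Proof.
elim/Bt_ind => x hx; elim/Bt_ind => y hy.
rewrite !mulB_mk; apply: mk_eq; rewrite /peq /pmul /=; ring.
Qed.
Lemma mul1B : left_id oneB mulB.
Proof.
elim/Bt_ind => x hx; rewrite /oneB mulB_mk; apply: mk_eq; rewrite /peq /pmul /=; ring.
Qed.
Lemma mulBDl : left_distributive mulB addB.
Proof.
elim/Bt_ind => x hx; elim/Bt_ind => y hy; elim/Bt_ind => z hz.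
rewrite (addB_mk hx hy) (mulB_mk (bd_add hx hy) hz) (mulB_mk hx hz) (mulB_mk hy hz).
rewrite (addB_mk (bd_mul hx hz) (bd_mul hy hz)); apply: mk_eq; rewrite /peq /pmul /padd /=; ring.
Qed.

HB.instance Definition _ := GRing.Zmodule_isComPzRing.Build Bt mulBA mulBC mul1B mulBDl.

Lemma addE (a b : Bt) : a + b = addB a b. Proof. by []. Qed.
Lemma mulE (a b : Bt) : a * b = mulB a b. Proof. by []. Qed.
Lemma oppE (a : Bt) : - a = oppB a. Proof. by []. Qed.
Lemma oneE : (1 : Bt) = oneB. Proof. by []. Qed.
Lemma zeroE : (0 : Bt) = zeroB. Proof. by []. Qed.

Lemma natB n : (n%:R : Bt) = mk (bd_nat n).
Proof.
elim: n => [|n IH]; first by rewrite mulr0n zeroE; apply: mk_eq.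
rewrite mulrSr IH addE oneE /oneB addB_mk; apply: mk_eq.
rewrite /peq /padd /= mulrSr; ring.
Qed.

Definition TB (b : Bt) : Prop := P0 (rep b).1.

Lemma TB_mk x h : TB (@mk x h) <-> P0 x.1.
Proof.
have E := rep_mk h; have [br _] := repP (mk h).
have [Lr _] := proj1 (bdE _) br; have [Lx _] := proj1 (bdE _) h.
rewrite /TB; split => H.
  have [_ Hl] := Lr; apply: Hl; rewrite -E; exact: P0mul H (Loc_P0 Lx).
have [_ Hl] := Lx; apply: Hl; rewrite E; exact: P0mul H (Loc_P0 Lr).
Qed.

Lemma TBadd a b : TB a -> TB b -> TB (a + b).
Proof.
elim/Bt_ind: a => x hx; elim/Bt_ind: b => y hy; rewrite addE addB_mk !TB_mk /= => H1 H2.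
case/bdE: hx => Lx _; case/bdE: hy => Ly _.
apply: P0add; apply: P0mul => //; exact: Loc_P0.
Qed.
Lemma TBmul a b : TB a -> TB b -> TB (a * b).
Proof.
elim/Bt_ind: a => x hx; elim/Bt_ind: b => y hy; rewrite mulE mulB_mk !TB_mk /= => H1 H2.
exact: P0mul.
Qed.
Lemma TBsq a : TB (a * a).
Proof. elim/Bt_ind: a => x hx; rewrite mulE mulB_mk !TB_mk /=; exact: P0sq. Qed.
Lemma TBarch a : exists N : nat, TB (N%:R - a) /\ TB (N%:R + a).
Proof.
elim/Bt_ind: a => x hx; have hx' := hx; case/bdE: hx' => Lx [n [H1 H2]].
exists n; rewrite natB addE oppE oppB_mk addB_mk addE addB_mk !TB_mk /= !mulr1.
split; [move: H2 | move: H1]; apply: P0_eq; ring.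
Qed.
Lemma TBinv m : (0 < m)%N -> exists i, m%:R * i = 1 :> Bt.
Proof.
move=> m0; exists (mk (bd_inv (HN m0))).
rewrite natB mulE mulB_mk oneE /oneB; apply: mk_eq; rewrite /peq /pmul /=; ring.
Qed.

Definition KDB := KD TBadd TBmul TBsq TBarch TBinv.

Lemma TB_1m n x (h : bd x) : TB (1 - n%:R * @mk x h) <-> P0 (x.2 - x.1 *+ n).
Proof.
rewrite natB mulE mulB_mk oppE oppB_mk oneE /oneB addE addB_mk TB_mk /=.
by split; apply: P0_eq; ring.
Qed.
Lemma TB_1p n x (h : bd x) : TB (1 + n%:R * @mk x h) <-> P0 (x.2 + x.1 *+ n).
Proof.
rewrite natB mulE mulB_mk oneE /oneB addE addB_mk TB_mk /=.
by split; apply: P0_eq; ring.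
Qed.

Lemma achar_1n F n (b : Bt) : achar TB F ->
  F (1 - n%:R * b) = Rminus R1 (Rmult (INR n) (F b)) /\
  F (1 + n%:R * b) = Rplus R1 (Rmult (INR n) (F b)).
Proof.
move=> HF; have [Fa [Fm [F1 _]]] := HF.
by rewrite !Fa (acharN HF) Fm (acharn HF) F1.
Qed.

Definition phiF (F : Bt -> R) (r s : A) : R :=
  match pselect (bd (r, s)) with left h => F (mk h) | right _ => R0 end.

Lemma phiF_mk F r s (h : bd (r, s)) : phiF F r s = F (mk h).
Proof. rewrite /phiF; case: pselect => [h'|//]; congr F; exact: mk_eq. Qed.

Lemma phiF_char F : achar TB F -> character le (phiF F).
Proof.
move=> HF; have [Fa [Fm [F1 Fp]]] := HF.
split.
  by move=> r s nb; rewrite /phiF; case: pselect.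
split.
  move=> r s r' s' b1 b2 E; have {}b1 : bd (r, s) := b1; have {}b2 : bd (r', s') := b2; rewrite (phiF_mk F b1) (phiF_mk F b2); congr F; exact: mk_eq.
split.
  have h1 : bd (1, 1) := bd_nat 1.
  rewrite (phiF_mk F h1) -F1 oneE /oneB; congr F; apply: mk_eq; rewrite /peq /=; ring.
split.
  move=> r s r' s' b1 b2; have {}b1 : bd (r, s) := b1; have {}b2 : bd (r', s') := b2; have hb := bd_add b1 b2.
  rewrite (phiF_mk F hb) (phiF_mk F b1) (phiF_mk F b2) -Fa addE addB_mk; congr F; exact: mk_eq.
split.
  move=> r s r' s' b1 b2; have {}b1 : bd (r, s) := b1; have {}b2 : bd (r', s') := b2; have hb := bd_mul b1 b2.
  rewrite (phiF_mk F hb) (phiF_mk F b1) (phiF_mk F b2) -Fm mulE mulB_mk; congr F; exact: mk_eq.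
move=> r s b P; have {}b : bd (r, s) := b; rewrite (phiF_mk F b); apply: Fp; exact/TB_mk.
Qed.

Definition Fof (phi : A -> A -> R) (b : Bt) : R := phi (rep b).1 (rep b).2.

Lemma Fof_mk phi x (h : bd x) : character le phi -> Fof phi (mk h) = phi x.1 x.2.
Proof.
move=> [_ [Hwd _]]; apply: Hwd; [exact: (repP _).1 | exact: h | exact: rep_mk].
Qed.

Lemma Fof_char phi : character le phi -> achar TB (Fof phi).
Proof.
move=> Hc; have Hc' := Hc; case: Hc' => [_ [_ [H1 [Hadd [Hmul Hpos]]]]].
split.
  elim/Bt_ind => x hx; elim/Bt_ind => y hy.
  rewrite addE addB_mk !(Fof_mk _ Hc); exact: Hadd.
split.
  elim/Bt_ind => x hx; elim/Bt_ind => y hy.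
  rewrite mulE mulB_mk !(Fof_mk _ Hc); exact: Hmul.
split; first by rewrite oneE /oneB (Fof_mk _ Hc).
elim/Bt_ind => x hx; move/TB_mk => H; rewrite (Fof_mk _ Hc); exact: Hpos.
Qed.

Lemma main_sec (Hloc : localizable le) r :
  in_gelfand_kernel le r <->
  exists s : A, le 0 s /\
    forall n : nat, (0 < n)%N -> le (- s) (r *+ n) /\ le (r *+ n) s.
Proof.
split.
  move=> [s [hrs [t [Lt [Hincl Hvan]]]]].
  have ht : bd (1, t) := bd_inv Lt.
  have hrs' : bd (r, s) := hrs.
  have Fa0 : forall F, achar TB F -> F (mk (bd_mul hrs' ht)) = R0.
    move=> F HF; have Hc := phiF_char HF; have [_ [Fm [_ Fp]]] := HF.
    rewrite -mulB_mk -mulE Fm.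
    have F1t : Rle R0 (F (mk ht)) by apply: Fp; apply/TB_mk; exact: P01.
    case: (Rle_lt_or_eq_dec _ _ F1t) => [pos|<-]; last by rewrite Rmult_0_r.
    have inOt : inO t (phiF F) by rewrite /inO (phiF_mk F ht).
    have := Hvan _ Hc inOt; have := Hincl _ Hc inOt; rewrite /inO /gelfand_comp.
    move=> pos_s E; rewrite (phiF_mk F hrs') in E.
    case: (Rmult_integral _ _ E) => [E'|->]; last by rewrite Rmult_0_l.
    exfalso; move: E'; apply: Rinv_neq_0_compat; lra.
  have [Ls _] := proj1 (bdE _) hrs'.
  exists (s * t); split; first exact: P0mul (Loc_P0 Ls) (Loc_P0 Lt).
  move=> n n0.
  have K1 : TB (1 - n%:R * mk (bd_mul hrs' ht)).
    apply: KDB => F HF; have [e1 _] := achar_1n n (mk (bd_mul hrs' ht)) HF.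
    rewrite e1 (Fa0 F HF); lra.
  have K2 : TB (1 + n%:R * mk (bd_mul hrs' ht)).
    apply: KDB => F HF; have [_ e2] := achar_1n n (mk (bd_mul hrs' ht)) HF.
    rewrite e2 (Fa0 F HF); lra.
  move/TB_1m: K1 => /= K1; move/TB_1p: K2 => /= K2.
  split; apply/le_P0.
    by move: K2; apply: P0_eq; rewrite mulr1; ring.
  by move: K1; apply: P0_eq; rewrite mulr1.
move=> [s0 [Hs0 Hb]].
have [t [Lt [Ht1 Ht2]]] := Hloc s0.
move/le_P0: Ht2 => Pts.
have [Hm1 Hp1] := Hb 1%N isT.
rewrite mulr1n in Hm1 Hp1.
move/le_P0: Hm1 => Hm1; move/le_P0: Hp1 => Hp1.
have hrt : bd (r, t).
  apply/bdE; split => //; exists 1%N; rewrite /= mul1r; split.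
    have -> : t + r = (t - s0) + (r - - s0) by ring.
    exact: P0add.
  have -> : t - r = (t - s0) + (s0 - r) by ring.
  exact: P0add.
exists t; split; first exact: hrt.
exists t; split => //; split; first by [].
move=> phi Hc inOt; rewrite /gelfand_comp.
have HF := Fof_char Hc.
suff : Fof phi (mk hrt) = R0 by rewrite (Fof_mk _ Hc) /= => ->; rewrite Rmult_0_r.
apply: (@small_zero _ R1) => n n0.
have [Hn1 Hn2] := Hb n n0.
move/le_P0: Hn1 => Hn1; move/le_P0: Hn2 => Hn2.
have K1 : TB (1 - n%:R * mk hrt).
  apply/TB_1m => /=.
  have -> : t - r *+ n = (t - s0) + (s0 - r *+ n) by ring.
  exact: P0add.
have K2 : TB (1 + n%:R * mk hrt).
  apply/TB_1p => /=.
  have -> : t + r *+ n = (t - s0) + (r *+ n - - s0) by ring.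
  exact: P0add.
have [_ [_ [_ Fp]]] := HF.
have [e1 e2] := achar_1n n (mk hrt) HF.
have := Fp _ K1; have := Fp _ K2; rewrite e1 e2; lra.
Qed.

End Concrete.

Local Open Scope ring_scope.

Theorem corollary28 (A : comPzRingType) (le : A -> A -> Prop)
  (Hpo : is_pocr le) (Hloc : localizable le)
  (HN : forall n : nat, (0 < n)%N -> Loc le (n%:R : A)) (r : A) :
  in_gelfand_kernel le r <->
  exists s : A, le 0 s /\
    forall n : nat, (0 < n)%N -> le (- s) (r *+ n) /\ le (r *+ n) s.
Proof. exact: (main_sec Hpo HN Hloc r). Qed.
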